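(* Let $C=(c_{k,j})\in\mathbb{R}_{\max}^{p\times n}$, $\mu^+\in\mathbb{Z}_{\ge0}^p$, $\mu^-\in\mathbb{Z}_{\ge0}^n$ and $f(x)=\sum_{k=1}^p\mu^+_k\max_{j\in[n]}(c_{k,j}+x_j)-\sum_{j=1}^n\mu^-_jx_j$. Then: (1) $f(\alpha\otimes x)=f(x)+\alpha\big(\sum_{k\in[p]}\mu^+_k-\sum_{j\in[n]}\mu^-_j\big)$ for any $x\in\mathbb{R}_{\max}^n$ and $\alpha\in\mathbb{R}$; (2) $f(x)+f(y)\ge f(x\oplus y)+f(x\oplus' y)$ for any $x,y\in\mathbb{R}_{\max}^n$.
   Context: $\mathbb{R}_{\max}=\mathbb{R}\cup\{-\infty\}$; $\alpha\otimes x$ is the vector with entries $\alpha+x_j$; $x\oplus y$ and $x\oplus' y$ are the entrywise maximum and minimum of $x$ and $y$. The identities are understood for vectors on which $f$ is well defined. *)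

(* Defs.v *)
From mathcomp Require Import all_boot all_order all_algebra.
From mathcomp Require Import constructive_ereal reals.
Set Implicit Arguments. Unset Strict Implicit. Unset Printing Implicit Defensive.
Import Order.TTheory GRing.Theory Num.Theory.
Local Open Scope ring_scope.
Local Open Scope ereal_scope.

(* Elements of R_max = R ∪ {-oo} are modeled as extended reals different
   from +oo. Vectors in R_max^n are functions 'I_n -> \bar R. *)
Definition is_Rmax (R : realType) (n : nat) (x : 'I_n -> \bar R) : Prop :=
  forall j, x j != +oo.

Definition rowmax (R : realType) (p n : nat) (C : 'I_p -> 'I_n -> \bar R)
  (x : 'I_n -> \bar R) (k : 'I_p) : \bar R :=
  \big[maxe/-oo]_(j < n) (C k j + x j).

Definition fpos (R : realType) (p n : nat) (C : 'I_p -> 'I_n -> \bar R)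
  (mup : 'I_p -> nat) (x : 'I_n -> \bar R) : \bar R :=
  \sum_(k < p) ((mup k)%:R)%:E * rowmax C x k.

Definition fneg (R : realType) (n : nat) (mum : 'I_n -> nat)
  (x : 'I_n -> \bar R) : \bar R :=
  \sum_(j < n) ((mum j)%:R)%:E * x j.

Definition ftrop (R : realType) (p n : nat) (C : 'I_p -> 'I_n -> \bar R)
  (mup : 'I_p -> nat) (mum : 'I_n -> nat) (x : 'I_n -> \bar R) : \bar R :=
  fpos C mup x - fneg mum x.

(* f is well defined at x: no (-oo) - (-oo), i.e. not (-oo) + (+oo). *)
Definition f_welldef (R : realType) (p n : nat) (C : 'I_p -> 'I_n -> \bar R)
  (mup : 'I_p -> nat) (mum : 'I_n -> nat) (x : 'I_n -> \bar R) : Prop :=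
  ~ (fpos C mup x = -oo /\ fneg mum x = -oo).

(* alpha ⊗ x, x ⊕ y (entrywise max), x ⊕' y (entrywise min) *)
Definition tscale (R : realType) (n : nat) (a : R) (x : 'I_n -> \bar R) :
  'I_n -> \bar R := fun j => a%:E + x j.
Definition tplus (R : realType) (n : nat) (x y : 'I_n -> \bar R) :
  'I_n -> \bar R := fun j => maxe (x j) (y j).
Definition tmin (R : realType) (n : nat) (x y : 'I_n -> \bar R) :
  'I_n -> \bar R := fun j => mine (x j) (y j).

(* Main.v *)
Require Import Defs.
From mathcomp Require Import all_boot all_order all_algebra.
From mathcomp Require Import constructive_ereal reals.
From mathcomp Require Import lra.
Import Order.TTheory GRing.Theory Num.Theory.
Local Open Scope ring_scope.
Local Open Scope ereal_scope.

Lemma core2 (R : realType) (PM Pm Px Py NM Nm Nx Ny : \bar R) :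
  PM != +oo -> Pm != +oo -> Px != +oo -> Py != +oo ->
  NM != +oo -> Nm != +oo -> Nx != +oo -> Ny != +oo ->
  ~ (PM = -oo /\ NM = -oo) -> ~ (Pm = -oo /\ Nm = -oo) ->
  ~ (Px = -oo /\ Nx = -oo) -> ~ (Py = -oo /\ Ny = -oo) ->
  Pm <= Px -> Pm <= Py -> PM + Pm <= Px + Py -> NM + Nm = Nx + Ny ->
  (PM - NM) + (Pm - Nm) <= (Px - Nx) + (Py - Ny).
Proof.
case: PM => [a| |] //; case: Pm => [b| |] //; case: Px => [c| |] //;
case: Py => [d| |] //; case: NM => [e| |] //; case: Nm => [f| |] //;
case: Nx => [g| |] //; case: Ny => [h| |] //= _ _ _ _ _ _ _ _ W1 W2 W3 W4;
try by (exfalso; tauto).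
all: clear W1 W2 W3 W4.
all: rewrite /= ?lee_fin ?leey ?leNye //.
all: move=> H1 H2 H3 H4.
all: try by [].
all: try by (exfalso; move: H1 H2 H3 H4; rewrite /= ?lee_fin ?leey ?leNye ?leeNy_eq ?leye_eq //).
all: case: H4 => H4; lra.
Qed.

Lemma core1 (R : realType) (P N : \bar R) (A B : R) :
  P != +oo -> N != +oo -> ~ (P = -oo /\ N = -oo) ->
  (P + A%:E) - (N + B%:E) = (P - N) + (A - B)%:E.
Proof.
case: P => [a| |] //; case: N => [b| |] //= _ _ W; try by (exfalso; tauto).
by congr (_%:E); lra.
Qed.

Lemma addne (R : realType) (a b : \bar R) : a != +oo -> b != +oo -> a + b != +oo.
Proof. by case: a => [a| |] //; case: b. Qed.

Lemma mulne (R : realType) (m : nat) (b : \bar R) : b != +oo -> (m%:R)%:E * b != +oo.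
Proof.
case: b => [b| |] // _; rewrite mulrNy.
have [->|] := eqVneq m 0%N; first by rewrite sgr0 mul0e.
by move=> m0; rewrite gtr0_sg ?ltr0n ?lt0n // mul1e.
Qed.

Lemma sumne (R : realType) q (F : 'I_q -> \bar R) :
  (forall i, F i != +oo) -> \sum_(i < q) F i != +oo.
Proof. move=> H; elim/big_ind: _ => //; exact: addne. Qed.

Lemma maxne (R : realType) (a b : \bar R) : a != +oo -> b != +oo -> maxe a b != +oo.
Proof. by rewrite maxEle; case: ifP. Qed.

Lemma minne (R : realType) (a b : \bar R) : a != +oo -> b != +oo -> mine a b != +oo.
Proof. by rewrite minEle; case: ifP. Qed.

Lemma mM (R : realType) (a b c : \bar R) :
  a * maxe b c + a * mine b c = a * b + a * c.
Proof. rewrite maxEle minEle; case: ifP => _ //; exact: addeC. Qed.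

Section S.
Variables (R : realType) (p n : nat) (C : 'I_p -> 'I_n -> \bar R)
  (mup : 'I_p -> nat) (mum : 'I_n -> nat).
Hypothesis HC : forall k j, C k j != +oo.

Lemma rowmax_ne (x : 'I_n -> \bar R) k : is_Rmax x -> rowmax C x k != +oo.
Proof.
move=> hx; rewrite /rowmax; elim/big_ind: _ => //; first exact: maxne.
move=> j _; exact: addne.
Qed.

Lemma fpos_ne (x : 'I_n -> \bar R) : is_Rmax x -> fpos C mup x != +oo.
Proof. move=> hx; apply: sumne => k; apply: mulne; exact: rowmax_ne. Qed.

Lemma fneg_ne (x : 'I_n -> \bar R) : is_Rmax x -> fneg mum x != +oo.
Proof. move=> hx; apply: sumne => k; apply: mulne; exact: hx. Qed.

Lemma rowmax_le (x y : 'I_n -> \bar R) k : (forall j, x j <= y j) -> rowmax C x k <= rowmax C y k.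
Proof.
move=> hxy; rewrite /rowmax.
elim/big_rec2: _ => // j u v _ huv; apply: le_max2 => //; exact: leeD.
Qed.

Lemma rowmax_plus (x y : 'I_n -> \bar R) k :
  rowmax C (tplus x y) k = maxe (rowmax C x k) (rowmax C y k).
Proof.
rewrite /rowmax /tplus.
elim/big_rec3: _ => [|j u v w _ ->]; first by rewrite maxxx.
by rewrite adde_maxr maxACA.
Qed.

Lemma fpos_le (x y : 'I_n -> \bar R) : (forall j, x j <= y j) -> fpos C mup x <= fpos C mup y.
Proof.
move=> hxy; apply: lee_sum => k _; apply: lee_wpmul2l; first by rewrite lee_fin.
exact: rowmax_le.
Qed.

Lemma fpos_sub (x y : 'I_n -> \bar R) :
  fpos C mup (tplus x y) + fpos C mup (tmin x y) <= fpos C mup x + fpos C mup y.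
Proof.
rewrite /fpos -!big_split /=; apply: lee_sum => k _.
rewrite rowmax_plus -(mM _ _ (rowmax C x k)); apply: leeD => //.
apply: lee_wpmul2l; first by rewrite lee_fin.
rewrite le_min; apply/andP; split; apply: rowmax_le => j; rewrite /tmin;
  by rewrite ge_min lexx ?orbT.
Qed.

Lemma fneg_mod (x y : 'I_n -> \bar R) :
  fneg mum (tplus x y) + fneg mum (tmin x y) = fneg mum x + fneg mum y.
Proof. rewrite /fneg -!big_split /=; apply: eq_bigr => j _; exact: mM. Qed.

Lemma rowmax_scale (x : 'I_n -> \bar R) (a : R) k :
  rowmax C (tscale a x) k = a%:E + rowmax C x k.
Proof.
rewrite /rowmax /tscale.
elim/big_rec2: _ => [|j u v _ ->]; first by rewrite addeNy.
by rewrite adde_maxr addeCA.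
Qed.

End S.

Lemma sum_scale (R : realType) q (m : 'I_q -> nat) (v : 'I_q -> \bar R) (a : R) :
  \sum_(i < q) ((m i)%:R)%:E * (a%:E + v i) =
  \sum_(i < q) ((m i)%:R)%:E * v i + (a * \sum_(i < q) (m i)%:R)%:E.
Proof.
rewrite mulr_sumr -sumEFin -big_split /=; apply: eq_bigr => i _.
rewrite muleDr ?fin_num_adde_defr // addeC -EFinM mulrC //.
Qed.

Theorem proposition3p1 (R : realType) (p n : nat)
  (C : 'I_p -> 'I_n -> \bar R) (mup : 'I_p -> nat) (mum : 'I_n -> nat) :
  (forall k j, C k j != +oo) ->
  (forall (x : 'I_n -> \bar R) (a : R),
      is_Rmax x -> f_welldef C mup mum x ->
      ftrop C mup mum (tscale a x) =
      ftrop C mup mum x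
      + (a * ((\sum_(k < p) (mup k)%:R) - (\sum_(j < n) (mum j)%:R)))%:E)
  /\
  (forall x y : 'I_n -> \bar R,
      is_Rmax x -> is_Rmax y ->
      f_welldef C mup mum x -> f_welldef C mup mum y ->
      f_welldef C mup mum (tplus x y) -> f_welldef C mup mum (tmin x y) ->
      ftrop C mup mum (tplus x y) + ftrop C mup mum (tmin x y)
      <= ftrop C mup mum x + ftrop C mup mum y).
Proof.
move=> HC; split.
  move=> x a hx wx; rewrite /ftrop.
  have -> : fpos C mup (tscale a x) = fpos C mup x + (a * \sum_(k < p) (mup k)%:R)%:E.
    rewrite /fpos; under eq_bigr do rewrite rowmax_scale.
    exact: sum_scale.
  have -> : fneg mum (tscale a x) = fneg mum x + (a * \sum_(j < n) (mum j)%:R)%:E.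
    exact: sum_scale.
  rewrite core1 ?mulrBr //; [exact: fpos_ne | exact: fneg_ne].
move=> x y hx hy wx wy wM wm.
have hM : is_Rmax (tplus x y) by move=> j; apply: maxne.
have hm : is_Rmax (tmin x y) by move=> j; apply: minne.
apply: core2 => //; try (apply: fpos_ne => //); try (apply: fneg_ne => //).
- apply: fpos_le => j; rewrite /tmin ge_min lexx //.
- apply: fpos_le => j; rewrite /tmin ge_min lexx ?orbT //.
- exact: fpos_sub.
- exact: fneg_mod.
Qed.
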